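(* In the crossed product setting described in the context, with $\ast$ an involution on $D$ satisfying $K^\ast\subseteq K$, the following are equivalent: (1) $D\otimes_F K$ is formally real, i.e. the involution $\#$ on $M_n(K)$ is formally real; (2) $\ast$ is formally real on $D$ and $(k^\ast)^\sigma=(k^\sigma)^\ast$ for every $k\in K$ and $\sigma\in G$; (3) $e_\sigma^\ast e_\sigma\in K$ for every $\sigma\in G$, and there exists a unital hermitian cone on $(K,\ast)$ containing all $e_\sigma^\ast e_\sigma$, $\sigma\in G$.
   Context: Let $K/F$ be a finite Galois extension of fields of characteristic $0$ with Galois group $G$, $n=|G|$; write $k^\sigma$ for the image of $k\in K$ under $\sigma$. Let $\Phi\colon G\times G\to K\setminus\{0\}$ be a normalized $2$-cocycle and $D=(K/F,\Phi)$ the crossed product: right $K$-vector space with basis $(e_\sigma)_{\sigma\in G}$, $e_{\mathrm{id}}=1$, multiplication $(\sum_\sigma e_\sigma c_\sigma)(\sum_\tau e_\tau d_\tau)=\sum_{\sigma,\tau}e_{\sigma\tau}\Phi(\sigma,\tau)c_\sigma^\tau d_\tau$ (so $ke_\sigma=e_\sigma k^\sigma$). Assume $D$ is a division algebra. Define $f\colon D\to K$ by $f(\sum_\sigma e_\sigma c_\sigma)=c_{\mathrm{id}}$. Let $\lambda\colon D\to M_n(K)$ (rows and columns indexed by $G$) be the left regular representation, $ae_\tau=\sum_\sigma e_\sigma\lambda(a)_{\sigma\tau}$; the map $a\otimes k\mapsto\lambda(a)k$ is an isomorphism $D\otimes_F K\cong M_n(K)$. For $X=[x_{\sigma\tau}]\in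 M_n(K)$ put $X^\ast=[x_{\tau\sigma}^\ast]$, let $A=[f(e_\sigma^\ast e_\tau)]_{\sigma,\tau\in G}$ (invertible with $A^\ast=A$), and let $X^\#=A^{-1}X^\ast A$, the involution on $M_n(K)$ with $\lambda(a^\ast)=\lambda(a)^\#$. An involution $\#$ on a ring $R$ is formally real if every finite sum of nonzero elements $rr^\#$ is nonzero. A unital hermitian cone on a ring $R$ with involution $\ast$ is a subset $M\subseteq\{r:r^\ast=r\}$ with $1\in M$, $M+M\subseteq M$, $aMa^\ast\subseteq M$ for all $a\in R$, and $M\cap-M=\{0\}$. *)

(* Defs.v *)
From HB Require Import structures.
From mathcomp Require Import all_boot all_order all_algebra all_fingroup all_field.
Set Implicit Arguments. Unset Strict Implicit. Unset Printing Implicit Defensive.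
Import GRing.Theory.
Local Open Scope ring_scope.

Definition formally_real (R : zmodType) (mul : R -> R -> R) (inv : R -> R) : Prop :=
  forall s : seq R, s != [::] -> all (fun r => r != 0) s ->
    \sum_(r <- s) mul r (inv r) != 0.

Definition unital_hermitian_cone (R : pzRingType) (inv : R -> R) (M : pred R) : Prop :=
  [/\ forall r, M r -> inv r = r,
      M 1,
      forall x y, M x -> M y -> M (x + y),
      forall a x, M x -> M (a * x * inv a)
    & forall x, (M x && M (- x)) = (x == 0)].

Notation GalT L := (gal_of (fullv : {vspace L})).

Section CrossedProduct.
Variables (F : fieldType) (L : splittingFieldType F).
(* The Galois group G of L/F; sigma k (written k^sigma in the paper) is
   the image of k; MathComp's product satisfies (s * t) k = t (s k),
   i.e. k^(st) = (k^s)^t, matching the paper's right-action convention. *)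
Local Notation GalT := (gal_of (fullv : {vspace L})).
Variable Phi : GalT -> GalT -> L.

(* Elements of D = (K/F, Phi): sum_s e_s c_s is represented by s |-> c_s. *)
Definition CP := {ffun GalT -> L}.

(* (sum e_s c_s)(sum e_t d_t) = sum e_(st) Phi(s,t) c_s^t d_t *)
Definition cp_mul (a b : CP) : CP :=
  [ffun r => \sum_(s : GalT) \sum_(t : GalT | (s * t)%g == r) Phi s t * t (a s) * b t].

Definition cp_e (s : GalT) : CP := [ffun r => if r == s then 1 else 0].
Definition cp_one : CP := cp_e 1%g.
Definition cp_emb (k : L) : CP := [ffun r => if r == 1%g then k else 0].
Definition cp_f (a : CP) : L := a 1%g.

Definition normalized_cocycle : Prop :=
  [/\ forall s t, Phi s t != 0,
      forall s, Phi 1%g s = 1,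
      forall s, Phi s 1%g = 1
    & forall s t r, Phi (s * t)%g r * r (Phi s t) = Phi s (t * r)%g * Phi t r].

Definition cp_division : Prop :=
  forall a : CP, a != 0 -> exists b : CP, cp_mul a b = cp_one /\ cp_mul b a = cp_one.

Definition cp_involution (star : CP -> CP) : Prop :=
  [/\ forall a b, star (a + b) = star a + star b,
      forall a b, star (cp_mul a b) = cp_mul (star b) (star a)
    & forall a, star (star a) = a].

(* restriction of star to K (meaningful when K^* is contained in K) *)
Definition kstar (star : CP -> CP) (k : L) : L := cp_f (star (cp_emb k)).

Definition in_K (a : CP) : Prop := forall r, r != 1%g -> a r = 0.

(* rows/columns of M_n(K) indexed by G via enum_val : 'I_#|G| -> G *)
Definition lambda (a : CP) : 'M[L]_#|{: GalT}| :=
  \matrix_(i, j) cp_mul a (cp_e (enum_val j)) (enum_val i).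

Definition mx_star (star : CP -> CP) (X : 'M[L]_#|{: GalT}|) : 'M[L]_#|{: GalT}| :=
  \matrix_(i, j) kstar star (X j i).

Definition Amx (star : CP -> CP) : 'M[L]_#|{: GalT}| :=
  \matrix_(i, j) cp_f (cp_mul (star (cp_e (enum_val i))) (cp_e (enum_val j))).

Definition mx_sharp (star : CP -> CP) (X : 'M[L]_#|{: GalT}|) : 'M[L]_#|{: GalT}| :=
  invmx (Amx star) *m mx_star star X *m Amx star.

End CrossedProduct.

(* Main.v *)
Require Import Defs.
From HB Require Import structures.
From mathcomp Require Import all_boot all_order all_algebra all_fingroup all_field.
From Stdlib Require ClassicalEpsilon.
Set Implicit Arguments. Unset Strict Implicit. Unset Printing Implicit Defensive.
Import GRing.Theory.
Local Open Scope ring_scope.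

Lemma inv_diag (K : fieldType) m (d : 'rV[K]_m) : (forall i, d 0 i != 0) ->
  invmx (diag_mx d) = diag_mx (\row_i (d 0 i)^-1) /\ diag_mx d \in unitmx.
Proof.
move=> nz.
have h : diag_mx d *m diag_mx (\row_i (d 0 i)^-1) = 1%:M.
  rewrite mul_mx_diag; apply/matrixP => i j; rewrite !mxE.
  have [->|nij] := eqVneq i j; first by rewrite mulr1n mulfV.
  by rewrite !mulr0n mul0r.
have u : diag_mx d \in unitmx by case: (mulmx1_unit h).
by split=> //; rewrite -[RHS](mulKmx u) h mulmx1.
Qed.


Lemma cone0 (R : pzRingType) inv (M : pred R) :
  unital_hermitian_cone inv M -> M 0.
Proof. by case=> _ _ _ _ h; have := h 0; rewrite eqxx => /andP[]. Qed.

Lemma cone_sum (R : pzRingType) inv (M : pred R) (HM : unital_hermitian_cone inv M)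
  I (l : seq I) (P : pred I) (f : I -> R) :
  (forall i, P i -> M (f i)) -> M (\sum_(i <- l | P i) f i).
Proof.
move=> h; apply: (big_ind M); [exact: cone0 HM | by case: HM => _ _ hD _ _ | exact: h].
Qed.

Lemma cone_sum0 (R : pzRingType) inv (M : pred R) (HM : unital_hermitian_cone inv M)
  (I : eqType) (l : seq I) (f : I -> R) :
  (forall i, i \in l -> M (f i)) -> \sum_(i <- l) f i = 0 -> forall i, i \in l -> f i = 0.
Proof.
elim: l => [//|x l IH] hM; rewrite big_cons => hs.
have Ml : M (\sum_(i <- l) f i).
  rewrite big_seq; apply: (cone_sum HM) => i il.
  by apply: (hM); rewrite in_cons il orbT.
have Mx : M (f x) by apply: (hM); rewrite in_cons eqxx.
have ex : - f x = \sum_(i <- l) f i by apply/eqP; rewrite eq_sym -addr_eq0 addrC hs.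
have fx0 : f x = 0.
  by apply/eqP; case: (HM) => _ _ _ _ <-; rewrite Mx ex Ml.
move: hs; rewrite fx0 add0r => hs.
move=> i; rewrite in_cons => /orP[/eqP -> //|il].
by apply: IH => // j jl; apply: (hM); rewrite in_cons jl orbT.
Qed.

Section CP.
Variables (F : fieldType) (L : splittingFieldType F).
Local Notation G := (gal_of (fullv : {vspace L})).
Variable Phi : G -> G -> L.
Hypothesis Phi_cocycle : normalized_cocycle Phi.

Lemma galM' (x y : G) a : (x * y)%g a = y (x a).
Proof. by rewrite galM // memvf. Qed.
Lemma gal1' a : (1 : G)%g a = a.
Proof. exact: gal_id. Qed.
Lemma gal_ext (x y : G) : (forall a, x a = y a) -> x = y.
Proof. by move=> H; apply/eqP/gal_eqP => a _; apply: H. Qed.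
Lemma galMr (x : G) a b : x (a * b) = x a * x b.
Proof. by rewrite rmorphM. Qed.
Lemma galDr (x : G) a b : x (a + b) = x a + x b.
Proof. by rewrite rmorphD. Qed.
Lemma gal_eq0 (x : G) a : (x a == 0) = (a == 0).
Proof. by rewrite fmorph_eq0. Qed.

Let mul := cp_mul Phi.
Local Notation emb := (@cp_emb F L).
Local Notation one := (@cp_one F L).

Lemma cp_mulEs a b r : mul a b r =
  \sum_s Phi s (s^-1 * r)%g * (s^-1 * r)%g (a s) * b (s^-1 * r)%g.
Proof.
rewrite ffunE; apply: eq_bigr => s _.
rewrite (big_pred1 (s^-1 * r)%g) // => t /=.
by apply/eqP/eqP => [<-|->]; [rewrite mulKg | rewrite mulKVg].
Qed.

Lemma cp_mulEt a b r : mul a b r =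
  \sum_t Phi (r * t^-1)%g t * t (a (r * t^-1)%g) * b t.
Proof.
have hinj : injective (fun t : G => r * t^-1)%g by move=> x y /mulgI /invg_inj.
rewrite cp_mulEs (reindex_inj hinj) /=.
by apply: eq_bigr => t _; rewrite invMg invgK mulgKV.
Qed.

Let cocy := Phi_cocycle.
Lemma Phi_neq0 (s t : G) : Phi s t != 0. Proof. by case: cocy. Qed.
Lemma Phi1l (s : G) : Phi 1%g s = 1. Proof. by case: cocy. Qed.
Lemma Phi1r (s : G) : Phi s 1%g = 1. Proof. by case: cocy. Qed.
Lemma PhiC (s t r : G) : Phi (s * t)%g r * r (Phi s t) = Phi s (t * r)%g * Phi t r.
Proof. by case: cocy. Qed.

Lemma cp_eE (s r : G) : cp_e s r = if r == s then 1 else 0. Proof. by rewrite ffunE. Qed.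
Lemma cp_embE k (r : G) : emb k r = if r == 1%g then k else 0. Proof. by rewrite ffunE. Qed.

Lemma mul_e_r a t r : mul a (cp_e t) r = Phi (r * t^-1)%g t * t (a (r * t^-1)%g).
Proof.
rewrite cp_mulEt (bigD1 t) //= big1 => [|u ne]; first by rewrite cp_eE eqxx mulr1 addr0.
by rewrite cp_eE (negbTE ne) mulr0.
Qed.

Lemma mul_e_l s b r : mul (cp_e s) b r = Phi s (s^-1 * r)%g * b (s^-1 * r)%g.
Proof.
rewrite cp_mulEs (bigD1 s) //= big1 => [|u ne]; first by rewrite cp_eE eqxx rmorph1 mulr1 addr0.
by rewrite cp_eE (negbTE ne) rmorph0 mulr0 mul0r.
Qed.

Lemma mul_emb_r a c r : mul a (emb c) r = a r * c.
Proof.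
rewrite cp_mulEt (bigD1 1%g) //= big1 => [|u ne].
  by rewrite cp_embE eqxx invg1 mulg1 Phi1r gal1' mul1r addr0.
by rewrite cp_embE (negbTE ne) mulr0.
Qed.

Lemma mul_emb_l k b r : mul (emb k) b r = r k * b r.
Proof.
rewrite cp_mulEs (bigD1 1%g) //= big1 => [|u ne].
  by rewrite cp_embE eqxx invg1 mul1g Phi1l mul1r addr0.
by rewrite cp_embE (negbTE ne) rmorph0 mulr0 mul0r.
Qed.

Lemma addE (a b : CP L) r : (a + b) r = a r + b r. Proof. by rewrite ffunE. Qed.
Lemma zeroE r : (0 : CP L) r = 0. Proof. by rewrite ffunE. Qed.
Lemma oppE (a : CP L) r : (- a) r = - a r. Proof. by rewrite ffunE. Qed.

Lemma cmulDl a b c : mul (a + b) c = mul a c + mul b c.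
Proof.
apply/ffunP => r; rewrite addE !cp_mulEt -big_split /=; apply: eq_bigr => t _.
by rewrite addE galDr mulrDr mulrDl.
Qed.
Lemma cmulDr a b c : mul a (b + c) = mul a b + mul a c.
Proof.
apply/ffunP => r; rewrite addE !cp_mulEt -big_split /=; apply: eq_bigr => t _.
by rewrite addE mulrDr.
Qed.
Lemma cmul0l a : mul 0 a = 0.
Proof. by apply/ffunP => r; rewrite zeroE cp_mulEt big1 // => t _; rewrite zeroE rmorph0 mulr0 mul0r. Qed.
Lemma cmul0r a : mul a 0 = 0.
Proof. by apply/ffunP => r; rewrite zeroE cp_mulEt big1 // => t _; rewrite zeroE mulr0. Qed.

Lemma cmulA a b c : mul (mul a b) c = mul a (mul b c).
Proof.
apply/ffunP => r; rewrite cp_mulEt.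
under eq_bigr => t _ do rewrite cp_mulEt rmorph_sum mulr_sumr mulr_suml.
rewrite [RHS]cp_mulEt.
under [RHS]eq_bigr => v _ do rewrite cp_mulEt !mulr_sumr.
rewrite [RHS]exchange_big /=; apply: eq_bigr => t _.
have hinj : injective (fun u : G => u * t)%g by apply: mulIg.
rewrite [RHS](reindex_inj hinj) /=; apply: eq_bigr => u _.
rewrite mulgK invMg mulgA !galMr -!galM'.
set x := (r * t^-1 * u^-1)%g.
have ex : (r * t^-1)%g = (x * u)%g by rewrite /x mulgKV.
rewrite ex.
have h := PhiC x u t.
by rewrite !mulrA h -!mulrA; congr (_ * _); rewrite mulrCA.
Qed.

Lemma sumE I (l : seq I) (P : pred I) (f : I -> CP L) r :
  (\sum_(i <- l | P i) f i) r = \sum_(i <- l | P i) f i r.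
Proof. exact: (big_morph (fun a : CP L => a r) (fun a b => addE a b r) (zeroE r)). Qed.

Lemma mul_sumr I (l : seq I) (P : pred I) (f : I -> CP L) a :
  mul a (\sum_(i <- l | P i) f i) = \sum_(i <- l | P i) mul a (f i).
Proof. exact: (big_morph (mul a) (fun x y => cmulDr a x y) (cmul0r a)). Qed.
Lemma mul_suml I (l : seq I) (P : pred I) (f : I -> CP L) a :
  mul (\sum_(i <- l | P i) f i) a = \sum_(i <- l | P i) mul (f i) a.
Proof. exact: (big_morph (mul^~ a) (fun x y => cmulDl x y a) (cmul0l a)). Qed.

Lemma cp_oneE : one = emb 1.
Proof. by apply/ffunP => r; rewrite cp_eE. Qed.
Lemma mul1 a : mul a one = a.
Proof. by apply/ffunP => r; rewrite cp_oneE mul_emb_r mulr1. Qed.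
Lemma mul1' a : mul one a = a.
Proof. by apply/ffunP => r; rewrite cp_oneE mul_emb_l rmorph1 mul1r. Qed.
Lemma embM k1 k2 : mul (emb k1) (emb k2) = emb (k1 * k2).
Proof. by apply/ffunP => r; rewrite mul_emb_r !cp_embE; case: eqP => _; rewrite ?mul0r. Qed.
Lemma embD k1 k2 : emb (k1 + k2) = emb k1 + emb k2.
Proof. by apply/ffunP => r; rewrite addE !cp_embE; case: eqP => _; rewrite ?addr0. Qed.
Lemma emb0 : emb 0 = 0.
Proof. by apply/ffunP => r; rewrite zeroE !cp_embE; case: eqP. Qed.
Lemma emb_inj : injective emb.
Proof. by move=> x y /ffunP /(_ 1%g); rewrite !cp_embE eqxx. Qed.
Lemma e_emb (s : G) c r : mul (cp_e s) (emb c) r = cp_e s r * c.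
Proof. by rewrite mul_emb_r. Qed.
Lemma emb_e k (s : G) : mul (emb k) (cp_e s) = mul (cp_e s) (emb (s k)).
Proof.
apply/ffunP => r; rewrite mul_emb_l mul_emb_r cp_eE.
by case: eqP => [->|_]; rewrite ?mulr1 ?mul1r ?mulr0 ?mul0r.
Qed.

Local Notation n := #|{: G}|.
Lemma decomp (a : CP L) : a = \sum_(k : 'I_n) mul (cp_e (enum_val k)) (emb (a (enum_val k))).
Proof.
apply/ffunP => r; rewrite sumE (bigD1 (enum_rank r)) //= big1 => [|k nk].
  by rewrite mul_emb_r enum_rankK cp_eE eqxx mul1r addr0.
rewrite mul_emb_r cp_eE; case: eqP => [e|]; last by rewrite mul0r.
by move: nk; rewrite e enum_valK eqxx.
Qed.

Lemma f_emb_l k (z : CP L) : cp_f (mul (emb k) z) = k * cp_f z.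
Proof. by rewrite /cp_f mul_emb_l gal1'. Qed.
Lemma f_emb_r k (z : CP L) : cp_f (mul z (emb k)) = cp_f z * k.
Proof. by rewrite /cp_f mul_emb_r. Qed.
Lemma f_sum I (l : seq I) (P : pred I) (f : I -> CP L) :
  cp_f (\sum_(i <- l | P i) f i) = \sum_(i <- l | P i) cp_f (f i).
Proof. exact: sumE. Qed.

Variable star : CP L -> CP L.
Hypothesis star_inv : cp_involution Phi star.
Hypothesis starK : forall k : L, exists k' : L, star (emb k) = emb k'.

Lemma starD a b : star (a + b) = star a + star b. Proof. by case: star_inv. Qed.
Lemma starM a b : star (mul a b) = mul (star b) (star a). Proof. by case: star_inv. Qed.
Lemma starI a : star (star a) = a. Proof. by case: star_inv. Qed.
Lemma star0 : star 0 = 0.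
Proof. by apply: (@addrI _ (star 0)); rewrite -starD !addr0. Qed.
Lemma star_sum I (l : seq I) (P : pred I) (f : I -> CP L) :
  star (\sum_(i <- l | P i) f i) = \sum_(i <- l | P i) star (f i).
Proof. exact: (big_morph star starD star0). Qed.
Lemma star_inj : injective star. Proof. exact: can_inj starI. Qed.
Lemma star_eq0 a : (star a == 0) = (a == 0).
Proof. by rewrite -{1}star0 (inj_eq star_inj). Qed.
Lemma star1 : star one = one.
Proof.
by rewrite -{1}(mul1 (star one)) -{2}(starI one) -starM mul1 starI.
Qed.

Local Notation kap := (kstar star).
Lemma star_emb k : star (emb k) = emb (kap k).
Proof. by have [k' e] := starK k; rewrite /kstar e /cp_f cp_embE eqxx. Qed.
Lemma kapD x y : kap (x + y) = kap x + kap y.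
Proof. by apply: emb_inj; rewrite -star_emb embD starD !star_emb embD. Qed.
Lemma kapM x y : kap (x * y) = kap x * kap y.
Proof. by apply: emb_inj; rewrite -star_emb -embM starM !star_emb embM mulrC. Qed.
Lemma kap1 : kap 1 = 1.
Proof. by apply: emb_inj; rewrite -star_emb -cp_oneE star1 cp_oneE. Qed.
Lemma kap0 : kap 0 = 0.
Proof. by apply: emb_inj; rewrite -star_emb emb0 star0. Qed.
Lemma kapK x : kap (kap x) = x.
Proof. by apply: emb_inj; rewrite -!star_emb starI. Qed.
Lemma kap_inj : injective kap. Proof. exact: can_inj kapK. Qed.
Lemma kap_eq0 x : (kap x == 0) = (x == 0).
Proof. by rewrite -{1}kap0 (inj_eq kap_inj). Qed.
Lemma kapV x : kap (x^-1) = (kap x)^-1.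
Proof.
have [->|nz] := eqVneq x 0; first by rewrite invr0 kap0 invr0.
have h : kap x * kap x^-1 = 1 by rewrite -kapM mulfV // kap1.
by rewrite -[LHS]mul1r -(mulVf (x := kap x)) ?kap_eq0 // -mulrA h mulr1.
Qed.

Lemma star_e_rel (s mu : G) k :
  star (cp_e s) mu * kap k = mu (kap (s k)) * star (cp_e s) mu.
Proof.
have := congr1 star (emb_e k s); rewrite !starM !star_emb => /ffunP /(_ mu).
by rewrite mul_emb_r mul_emb_l => ->.
Qed.

Lemma star_e_rel' (s mu : G) k : star (cp_e s) mu != 0 -> kap k = mu (kap (s k)).
Proof.
by move=> nz; apply: (mulIf nz); rewrite mulrC star_e_rel.
Qed.

Lemma star_e_uniq (s mu mu' : G) :
  star (cp_e s) mu != 0 -> star (cp_e s) mu' != 0 -> mu = mu'.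
Proof.
move=> h1 h2; apply: gal_ext => y.
have hy : y = kap (s ((s^-1)%g (kap y))) by rewrite -galM' mulVg gal1' kapK.
by rewrite hy -(star_e_rel' _ h1) -(star_e_rel' _ h2).
Qed.

Lemma star_e_uniq2 (s s' mu : G) :
  star (cp_e s) mu != 0 -> star (cp_e s') mu != 0 -> s = s'.
Proof.
move=> h1 h2; apply: gal_ext => y.
have := star_e_rel' y h1; rewrite (star_e_rel' y h2) => /fmorph_inj /kap_inj.
by [].
Qed.

Lemma star_e_neq0 (s : G) : exists mu, star (cp_e s) mu != 0.
Proof.
have [mu h|h] := pickP (fun mu => star (cp_e s) mu != 0); first by exists mu.
have : star (cp_e s) = 0.
  by apply/ffunP => mu; rewrite zeroE; have := h mu => /= /negbFE /eqP.
move/eqP; rewrite star_eq0 => /eqP /ffunP /(_ s); rewrite cp_eE eqxx zeroE.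
by move/eqP; rewrite oner_eq0.
Qed.

Lemma galVK (s : G) y : s ((s^-1)%g y) = y.
Proof. by rewrite -galM' mulVg gal1'. Qed.
Lemma galKV (s : G) y : (s^-1)%g (s y) = y.
Proof. by rewrite -galM' mulgV gal1'. Qed.

Lemma comm_iff (s : G) :
  star (cp_e s) (s^-1)%g != 0 <-> (forall k, s (kap k) = kap (s k)).
Proof.
split=> [h k|h].
  by rewrite (star_e_rel' k h) galVK.
have [mu hmu] := star_e_neq0 s.
suff -> : (s^-1)%g = mu by [].
apply: gal_ext => y; rewrite -{2}(galVK s y).
set z := (s^-1)%g y.
by rewrite -{1}(kapK z) (star_e_rel' (kap z) hmu) -h kapK.
Qed.

Lemma inK_iff (s : G) :
  in_K (mul (star (cp_e s)) (cp_e s)) <-> star (cp_e s) (s^-1)%g != 0.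
Proof.
split=> [h|h r nr].
  have [mu hmu] := star_e_neq0 s.
  have [e1|ne] := eqVneq (mu * s)%g 1%g.
    suff -> : (s^-1)%g = mu by [].
    by rewrite -[mu](mulgK s) e1 mul1g.
  have := h _ ne; rewrite mul_e_r mulgK => /eqP.
  by rewrite mulf_eq0 (negbTE (Phi_neq0 _ _)) gal_eq0 (negbTE hmu).
rewrite mul_e_r; apply/eqP; rewrite mulf_eq0 gal_eq0; apply/orP; right.
have [//|nz] := eqVneq (star (cp_e s) (r * s^-1)%g) 0.
have e1 := star_e_uniq nz h.
by move: nr; rewrite -[r](mulgKV s) e1 mulVg eqxx.
Qed.

Local Notation A := (Amx Phi star).
Lemma AmxE i j : A i j =
  Phi ((enum_val j)^-1)%g (enum_val j) * enum_val j (star (cp_e (enum_val i)) ((enum_val j)^-1)%g).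
Proof. by rewrite mxE /cp_f mul_e_r mul1g. Qed.

Lemma A_nz_iff i j : (A i j != 0) = (star (cp_e (enum_val i)) ((enum_val j)^-1)%g != 0).
Proof. by rewrite AmxE mulf_eq0 negb_or Phi_neq0 gal_eq0. Qed.

Section Diag.
Hypothesis Hc : forall s : G, star (cp_e s) (s^-1)%g != 0.

Lemma A_offdiag i j : i != j -> A i j = 0.
Proof.
move=> nij; apply/eqP; apply: contraNT nij; rewrite A_nz_iff => nz.
have := star_e_uniq nz (Hc _) => /invg_inj /enum_val_inj ->.
by [].
Qed.
Lemma A_diag_nz i : A i i != 0.
Proof. by rewrite A_nz_iff Hc. Qed.
Lemma A_diag : A = diag_mx (\row_i A i i).
Proof.
apply/matrixP => i j; rewrite [diag_mx _ i j]mxE [(\row__ _) _ _]mxE; have [->|nij] := eqVneq i j; first by rewrite mulr1n.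
by rewrite mulr0n A_offdiag.
Qed.
Lemma A_unit : A \in unitmx.
Proof. by rewrite A_diag; case: (inv_diag (d := \row_i A i i)) => // i; rewrite mxE A_diag_nz. Qed.
Lemma A_inv : invmx A = diag_mx (\row_i (A i i)^-1).
Proof.
rewrite {1}A_diag; case: (inv_diag (d := \row_i A i i)) => [i|-> _]; first by rewrite mxE A_diag_nz.
by congr diag_mx; apply/matrixP => i j; rewrite [LHS]mxE [RHS]mxE [X in X^-1]mxE.
Qed.
End Diag.

Lemma mx_starE X i j : mx_star star X i j = kap (X j i).
Proof. by rewrite mxE. Qed.

Lemma P2P0 (Hc : forall s : G, star (cp_e s) (s^-1)%g != 0) (M : pred L)
  (HM : unital_hermitian_cone kap M) (HA : forall i, M (A i i)) :
  formally_real (fun X Y : 'M[L]_n => X *m Y) (mx_sharp Phi star).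
Proof.
move=> sl sn0 sall; apply/negP => /eqP hsum.
set d := \row_i (A i i)^-1.
have dE j : d 0 j = (A j j)^-1 by rewrite /d mxE.
have h0 : \sum_(X <- sl) X *m diag_mx d *m mx_star star X = 0.
  move: hsum; rewrite /mx_sharp (A_inv Hc) -/d.
  under eq_bigr do rewrite !mulmxA.
  rewrite -mulmx_suml => /(congr1 (mulmx^~ (invmx A))).
  by rewrite mulmxK ?A_unit // mul0mx.
case: HM => Mh M1 MD Mc M0.
have Md j : M (d 0 j).
  have nz := A_diag_nz Hc j.
  have e : d 0 j = (A j j)^-1 * A j j * kap ((A j j)^-1).
    by rewrite dE kapV (Mh _ (HA j)) mulVf // mul1r.
  by rewrite e; apply: Mc.
have term (X : 'M[L]_n) i j : M (X i j * d 0 j * kap (X i j)) by apply: Mc.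
have HM : unital_hermitian_cone kap M by split.
have hii i : \sum_(X <- sl) \sum_j (X i j * d 0 j * kap (X i j)) = 0.
  have e := congr1 (fun N : 'M[L]_n => N i i) h0; rewrite /= summxE mxE in e.
  rewrite -[RHS]e.
  apply: eq_bigr => X _; rewrite mxE; apply: eq_bigr => j _.
  by rewrite mul_mx_diag mxE mx_starE.
have z X i j : X \in sl -> X i j = 0.
  move=> Xs.
  have Ms (Y : 'M[L]_n) : M (\sum_j (Y i j * d 0 j * kap (Y i j))).
    by apply: (cone_sum HM) => j' _; apply: term.
  have := cone_sum0 HM (fun Y _ => Ms Y) (hii i) Xs.
  move=> /(cone_sum0 HM (fun j' _ => term X i j')) /(_ j (mem_index_enum j)) /eqP.
  rewrite !mulf_eq0 kap_eq0 dE invr_eq0 (negbTE (A_diag_nz Hc j)) orbF orbb.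
  by move/eqP.
clear h0 hii; case: sl sn0 sall z hsum => [//|X0 sl] _ /= /andP[nX0 _] z _.
move/negP: nX0; apply; apply/eqP/matrixP => i j; rewrite mxE; apply: z.
by rewrite in_cons eqxx.
Qed.

Local Notation lam := (lambda Phi).
Lemma lamE a i j : lam a i j = mul a (cp_e (enum_val j)) (enum_val i).
Proof. by rewrite mxE. Qed.

Lemma lamM a b : lam (mul a b) = lam a *m lam b.
Proof.
apply/matrixP => i j; rewrite lamE mxE cmulA.
rewrite [mul b _]decomp mul_sumr sumE; apply: eq_bigr => k _.
by rewrite -cmulA mul_emb_r !lamE.
Qed.

Lemma lam_sum (I : Type) (l : seq I) (P : pred I) (f : I -> CP L) :
  lam (\sum_(i <- l | P i) f i) = \sum_(i <- l | P i) lam (f i).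
Proof.
apply/matrixP => i j; rewrite lamE summxE mul_suml sumE.
by apply: eq_bigr => k _; rewrite lamE.
Qed.

Lemma lam_eq0 a : lam a = 0 -> a = 0.
Proof.
move=> h; apply/ffunP => r; rewrite zeroE.
have := congr1 (fun N : 'M[L]_n => N (enum_rank r) (enum_rank 1%g)) h.
by rewrite lamE !enum_rankK -/(cp_one) mul1 mxE.
Qed.

Lemma lam_star_rel a : mx_star star (lam a) *m A = A *m lam (star a).
Proof.
apply/matrixP => i j; rewrite !mxE.
pose z := mul a (cp_e (enum_val i)).
transitivity (cp_f (mul (star z) (cp_e (enum_val j)))).
  rewrite [z]decomp star_sum mul_suml f_sum; apply: eq_bigr => k _.
  by rewrite starM star_emb cmulA f_emb_l mx_starE lamE mxE.
rewrite /z starM cmulA [mul (star a) _]decomp mul_sumr f_sum.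
apply: eq_bigr => k _.
by rewrite -cmulA f_emb_r lamE mxE.
Qed.

Lemma lam_star a : A \in unitmx -> lam (star a) = mx_sharp Phi star (lam a).
Proof. by move=> uA; rewrite /mx_sharp -mulmxA lam_star_rel mulKmx. Qed.

Lemma delta_mulmx (i : 'I_n) (B : 'M[L]_n) k l :
  (delta_mx i i *m B) k l = (k == i)%:R * B i l.
Proof.
rewrite mxE (bigD1 i) //= big1 => [|p np]; first by rewrite mxE eqxx andbT addr0.
by rewrite mxE (negbTE np) andbF mul0r.
Qed.
Lemma mulmx_delta (i : 'I_n) (B : 'M[L]_n) k l :
  (B *m delta_mx i i) k l = B k i * (l == i)%:R.
Proof.
rewrite mxE (bigD1 i) //= big1 => [|p np]; first by rewrite mxE eqxx /= addr0.
by rewrite mxE (negbTE np) mulr0.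
Qed.

Lemma P0comm :
  formally_real (fun X Y : 'M[L]_n => X *m Y) (mx_sharp Phi star) ->
  forall s : G, star (cp_e s) (s^-1)%g != 0.
Proof.
move=> H0 s; set i := enum_rank s.
have gi : enum_val i = s by rewrite enum_rankK.
set X := delta_mx i i : 'M[L]_n.
have nX : X != 0.
  apply/eqP => /matrixP /(_ i i); rewrite !mxE !eqxx => /eqP; by rewrite oner_eq0.
have hX := H0 [:: X] isT; rewrite /= nX big_seq1 in hX; have {}hX := hX isT.
have sX : mx_star star X = X.
  apply/matrixP => k l; rewrite mx_starE !mxE andbC.
  by case: (_ && _); rewrite ?kap1 ?kap0.
have key (B : 'M[L]_n) : B i i = 0 -> X *m (B *m X *m A) = 0.
  move=> Bz; rewrite !mulmxA.
  have -> : X *m B *m X = 0.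
    apply/matrixP => k l; rewrite mulmx_delta delta_mulmx Bz mxE.
    by rewrite mulr0 mul0r.
  by rewrite mul0mx.
case uA: (A \in unitmx).
  have Bnz : invmx A i i != 0.
    by apply/eqP => /key hz; move: hX; rewrite /mx_sharp sX hz eqxx.
  have [mu hmu] := star_e_neq0 s.
  set j := enum_rank (mu^-1)%g.
  have gj : enum_val j = (mu^-1)%g by rewrite enum_rankK.
  have Aij : A i j != 0 by rewrite A_nz_iff gi gj invgK.
  have Akj k : k != i -> A k j = 0.
    move=> nki; apply/eqP; apply: contraNT nki; rewrite A_nz_iff gj invgK => h.
    by apply/eqP; apply: enum_val_inj; rewrite gi (star_e_uniq2 h hmu).
  have := congr1 (fun N : 'M[L]_n => N i j) (mulVmx uA).
  rewrite mxE (bigD1 i) //= big1 => [|k nk]; last by rewrite Akj // mulr0.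
  rewrite addr0 [1%:M i j]mxE; have [eij|nij] := eqVneq i j.
    by move=> _; move: hmu; rewrite -[mu]invgK -gj -eij gi.
  by move/eqP; rewrite mulr0n mulf_eq0 (negbTE Bnz) (negbTE Aij).
have iA : invmx A = A by rewrite /invmx uA.
have Anz : A i i != 0.
  by apply/eqP => /key hz; move: hX; rewrite /mx_sharp iA sX hz eqxx.
by move: Anz; rewrite A_nz_iff gi.
Qed.

Lemma lam0 : lam 0 = 0.
Proof. by apply/matrixP => i j; rewrite lamE cmul0l zeroE mxE. Qed.

Lemma P0frD :
  formally_real (fun X Y : 'M[L]_n => X *m Y) (mx_sharp Phi star) ->
  formally_real mul star.
Proof.
move=> H0; have uA : A \in unitmx := A_unit (P0comm H0).
move=> sl sn0 sall; apply/negP => /eqP hs.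
have e : \sum_(X <- map lam sl) X *m mx_sharp Phi star X = 0.
  rewrite big_map.
  under eq_bigr do rewrite -lam_star // -lamM.
  by rewrite -lam_sum hs lam0.
have ne : map lam sl != [::] by case: (sl) sn0.
have al : all (fun X : 'M[L]_n => X != 0) (map lam sl).
  rewrite all_map; apply/allP => r rs /=; apply/eqP => /lam_eq0 r0.
  by move/allP: sall => /(_ r rs); rewrite r0 eqxx.
by move: (H0 _ ne al); rewrite e eqxx.
Qed.

Definition asb (P : Prop) : bool :=
  if ClassicalEpsilon.excluded_middle_informative P then true else false.
Lemma asbP (P : Prop) : reflect P (asb P).
Proof. by rewrite /asb; case: ClassicalEpsilon.excluded_middle_informative => h; constructor. Qed.

Lemma emb_inK z : in_K z -> emb (cp_f z) = z.
Proof.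
move=> h; apply/ffunP => r; rewrite cp_embE /cp_f.
by case: eqP => [->|/eqP nr] //; rewrite h.
Qed.

Lemma P1P2 : formally_real mul star -> (forall k (s : G), s (kap k) = kap (s k)) ->
  (forall s : G, in_K (mul (star (cp_e s)) (cp_e s))) /\
  exists M : pred L, unital_hermitian_cone kap M /\
    forall s : G, M (cp_f (mul (star (cp_e s)) (cp_e s))).
Proof.
move=> Hfr Hcomm.
have Hc s : star (cp_e s) (s^-1)%g != 0 by apply/comm_iff => k; apply: Hcomm.
have HK s : in_K (mul (star (cp_e s)) (cp_e s)) by apply/inK_iff.
split=> //.
pose P x := exists l : seq (CP L), emb x = \sum_(r <- l) mul r (star r).
exists (fun x => asb (P x)); split; last first.
  move=> s; apply/asbP; exists [:: star (cp_e s)].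
  by rewrite big_seq1 starI emb_inK.
split.
- move=> x /asbP [l e]; apply: emb_inj; rewrite -star_emb e star_sum.
  by apply: eq_bigr => r _; rewrite starM starI.
- apply/asbP; exists [:: one]; by rewrite big_seq1 star1 mul1 cp_oneE.
- move=> x y /asbP [l1 e1] /asbP [l2 e2]; apply/asbP; exists (l1 ++ l2).
  by rewrite embD big_cat e1 e2.
- move=> a x /asbP [l e]; apply/asbP; exists (map (mul (emb a)) l).
  rewrite -!embM e -star_emb mul_sumr mul_suml big_map; apply: eq_bigr => r _.
  by rewrite starM !cmulA.
move=> x; apply/idP/idP; last first.
  by move/eqP ->; rewrite oppr0 andbb; apply/asbP; exists [::]; rewrite big_nil emb0.
case/andP => /asbP [l1 e1] /asbP [l2 e2].
have hs : \sum_(r <- l1 ++ l2) mul r (star r) = 0.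
  by rewrite big_cat /= -e1 -e2 -embD subrr emb0.
have all0 r : r \in l1 ++ l2 -> r = 0.
  move=> rin; apply/eqP; apply/negPn/negP => nz.
  set l := filter (fun r => r != 0) (l1 ++ l2).
  have rl : r \in l by rewrite mem_filter nz rin.
  have ne : l != [::] by case: (l) rl.
  have al : all (fun r => r != 0) l by apply: filter_all.
  have := Hfr _ ne al; rewrite big_filter big_mkcond /=.
  rewrite -[X in _ != X]hs; apply/negP; apply/negPn/eqP; apply: eq_bigr => q _.
  by case: eqP => [->|]; rewrite ?cmul0l.
have : emb x = 0.
  rewrite e1 big_seq big1 // => r rl.
  by rewrite (all0 r) ?cmul0l // mem_cat rl.
by rewrite -emb0 => /emb_inj ->.
Qed.

Lemma final_tfae :
  [<->
    formally_real (fun X Y : 'M[L]_n => X *m Y) (mx_sharp Phi star);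
    formally_real mul star /\ (forall (k : L) (s : G), s (kap k) = kap (s k));
    (forall s : G, in_K (mul (star (cp_e s)) (cp_e s))) /\
      exists M : pred L, unital_hermitian_cone kap M /\
        forall s : G, M (cp_f (mul (star (cp_e s)) (cp_e s)))].
Proof.
tfae.
- move=> H0; split; first exact: P0frD.
  by move=> k s; apply: ((comm_iff s).1 (P0comm H0 s)).
- by case=> h1 h2; apply: P1P2.
case=> HK [M [HM HA]].
have Hc s : star (cp_e s) (s^-1)%g != 0 by apply/inK_iff.
by apply: (P2P0 Hc HM) => i; rewrite mxE.
Qed.
End CP.

Theorem theorem3p3 (F : fieldType) (L : splittingFieldType F)
  (Phi : GalT L -> GalT L -> L) (star : CP L -> CP L)
  (charF : [pchar F] =i pred0)
  (galLF : galois 1%AS (fullv : {vspace L}))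
  (Phi_cocycle : normalized_cocycle Phi)
  (Ddiv : cp_division Phi)
  (star_inv : cp_involution Phi star)
  (starK : forall k : L, exists k' : L, star (cp_emb k) = cp_emb k') :
  [<->
    formally_real (fun X Y : 'M[L]_#|{: GalT L}| => X *m Y) (mx_sharp Phi star);
    formally_real (cp_mul Phi) star /\
      (forall (k : L) (s : GalT L), s (kstar star k) = kstar star (s k));
    (forall s : GalT L, in_K (cp_mul Phi (star (cp_e s)) (cp_e s))) /\
      exists M : pred L, unital_hermitian_cone (kstar star) M /\
        forall s : GalT L, M (cp_f (cp_mul Phi (star (cp_e s)) (cp_e s)))].
Proof. exact: (final_tfae Phi_cocycle star_inv starK). Qed.
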